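(* Let $k\ge1$ and put $c_0=0$, $c_j=3^{j-1}\cdot100^{(k-1)^2}$ for $j=1,\dots,k+1$, and $c_{k+2}=100^{k^2}$; let $\xi_i=c_i-c_{i-1}-1$ for $i=1,\dots,k+2$. Let $$E=A(\xi_1)\,x_{c_0}\,A(\xi_2)\,x_{c_1}\,A(\xi_3)\,x_{c_2}\cdots x_{c_k}\,A(\xi_{k+2}),$$ and for a permutation $\sigma$ of $\{c_0,\dots,c_k\}$ let $E^\sigma=A(\xi_1)x_{\sigma(c_0)}A(\xi_2)x_{\sigma(c_1)}\cdots x_{\sigma(c_k)}A(\xi_{k+2})$. Let $a\in A(100^{k^2}-1)$ with $a\in B_1+\dots+B_k$, and suppose that for every permutation $\sigma$ other than the identity, no summand of $a$ lies in $E^\sigma$. Let $\bar b$ be the sum of all summands of $a$ that lie in $E$. Then $\bar b\in B_1+\dots+B_{k-1}$ (interpreted as $\{0\}$ when $k=1$).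
   Context: Let $K$ be a field and $A$ the free associative (non-unital) $K$-algebra on free generators $x_0,x_1,x_2,\dots$, with $K$-basis of monomials; $A^1$ is $A$ with unity adjoined. For $n\ge1$, $A(n)$ is the $K$-span of monomials of length $n$, and $A(0)=K$; a product of subspaces such as $E$ means the $K$-span of the corresponding products. A summand of $a\in A$ is a term $\kappa s$ ($\kappa\ne0$, $s$ a monomial) occurring in the expansion of $a$ in the monomial basis; it ''lies in'' a span of monomials if $s$ does. For a monomial $s=x_{i_1}\cdots x_{i_n}$ write $s[q]=x_{i_q}$. For $j\ge1$, $Z_j$ is the set of all elements $a\in A$ of one of the forms: (1) $a=\kappa s$, $\kappa\in K$, $s$ a monomial of length $100^{j^2}-1$ with $s[3^p\cdot100^{(j-1)^2}]=s[3^q\cdot100^{(j-1)^2}]$ for some $0\le p<q\le j$; (2) $a=\kappa(s_1+s_2)$, $\kappa\in K$, $s_1,s_2$ monomials of length $100^{j^2}-1$, with integers $0\le p<q\le j$ and $l_1>l_2\ge0$ such that $s_1$ has $x_{l_1}$ at position $3^p\cdot100^{(j-1)^2}$ and $x_{l_2}$ at position $3^q\cdot100^{(j-1)^2}$, $s_2$ has $x_{l_2}$ and $x_{l_1}$ at these positions respectively, and $s_1,s_2$ agree at all other positions. $B_j=\sum_{m\ge0}A(m\cdot100^{j^2})\,Z_j\,A^1$ (the $K$-span of products $uzv$ with $u\in A(m\cdot100^{j^2})$, $m\ge0$, $z\in Z_j$, $v\in A^1$). *)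

(* Defs.v *)
From Stdlib Require List.
From HB Require Import structures.
From mathcomp Require Import all_boot all_order all_algebra all_fingroup.
Set Implicit Arguments. Unset Strict Implicit. Unset Printing Implicit Defensive.
Import GRing.Theory.
Local Open Scope ring_scope.

(* Monomials x_{i1}...x_{in} of the free algebra on x_0,x_1,... are words
   [:: i1; ...; in] : seq nat (the empty word is the unit of A^1).
   An element of A^1 is represented by its coefficient function
   seq nat -> K (required to have finite support); A consists of those
   with zero coefficient at the empty word. *)
Section FreeAlg.
Variable K : fieldType.

Definition elt := seq nat -> K.

Definition fin_supp (f : elt) : Prop :=
  exists l : seq (seq nat), forall w, w \notin l -> f w = 0.

Definition mono (s : seq nat) : elt := fun w => if w == s then 1 else 0.

Definition mul (f g : elt) : elt :=
  fun w => \sum_(i < (size w).+1) f (take i w) * g (drop i w).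

(* f lies in A(n): finite span of monomials of length n (A(0) = K) *)
Definition homog (n : nat) (f : elt) : Prop :=
  fin_supp f /\ forall w, f w != 0 -> size w = n.

(* s[q], 1-indexed *)
Definition letter (s : seq nat) (q : nat) : nat := nth 0%N s q.-1.

Definition Nj (j : nat) : nat := (100 ^ (j ^ 2))%N.
Definition Mj (j : nat) : nat := (100 ^ ((j.-1) ^ 2))%N.

Definition inZ (j : nat) (z : elt) : Prop :=
  (exists (kap : K) (s : seq nat) (p q : nat),
      size s = (Nj j).-1 /\ (p < q <= j)%N /\
      letter s (3 ^ p * Mj j) = letter s (3 ^ q * Mj j) /\
      forall w, z w = kap * mono s w)
  \/
  (exists (kap : K) (s1 s2 : seq nat) (p q l1 l2 : nat),
      size s1 = (Nj j).-1 /\ size s2 = (Nj j).-1 /\ (p < q <= j)%N /\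
      (l2 < l1)%N /\
      letter s1 (3 ^ p * Mj j) = l1 /\ letter s1 (3 ^ q * Mj j) = l2 /\
      letter s2 (3 ^ p * Mj j) = l2 /\ letter s2 (3 ^ q * Mj j) = l1 /\
      (forall r, (1 <= r)%N -> r != (3 ^ p * Mj j)%N -> r != (3 ^ q * Mj j)%N ->
          letter s1 r = letter s2 r) /\
      forall w, z w = kap * (mono s1 w + mono s2 w)).

Definition in_span (P : elt -> Prop) (f : elt) : Prop :=
  exists gs : seq (K * elt), (forall g, Coq.Lists.List.In g gs -> P g.2) /\
    forall w, f w = \sum_(g <- gs) g.1 * g.2 w.

Definition Bgen (j : nat) (g : elt) : Prop :=
  exists (m : nat) (u z v : elt),
    homog (m * Nj j) u /\ inZ j z /\ fin_supp v /\
    forall w, g w = mul (mul u z) v w.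

Definition inB (j : nat) (f : elt) : Prop := in_span (Bgen j) f.

Definition inBsum (n : nat) (f : elt) : Prop :=
  exists bs : nat -> elt, (forall j, (1 <= j <= n)%N -> inB j (bs j)) /\
    forall w, f w = \sum_(1 <= j < n.+1) bs j w.

End FreeAlg.

(* Monomial s lies in A(g1) x_{l1} A(g2) x_{l2} ... x_{lr} A(glast),
   where blocks = [:: (g1,l1); ...; (gr,lr)]. *)
Fixpoint in_pat (blocks : seq (nat * nat)) (glast : nat) (s : seq nat) : bool :=
  match blocks with
  | [::] => size s == glast
  | (g, l) :: bs => [&& (g < size s)%N, nth 0%N s g == l & in_pat bs glast (drop g.+1 s)]
  end.

Definition cc (k i : nat) : nat :=
  if i == 0%N then 0%N
  else if (i <= k.+1)%N then (3 ^ i.-1 * 100 ^ ((k.-1) ^ 2))%N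
  else (100 ^ (k ^ 2))%N.

Definition xi (k i : nat) : nat := (cc k i - cc k i.-1 - 1)%N.

(* E^sigma, sigma a permutation of {c_0,...,c_k} given via indices:
   sigma(c_i) = c_(sig i). *)
Definition in_Esig (k : nat) (sig : {perm 'I_k.+1}) (s : seq nat) : bool :=
  in_pat [seq (xi k i.+1, cc k (sig (inord i))) | i <- iota 0 k.+1] (xi k k.+2) s.

(* Main.v *)
Require Import Defs.
From HB Require Import structures.
From mathcomp Require Import all_boot all_order all_algebra all_fingroup.
From mathcomp Require Import zify ring.
From Stdlib Require Import FunctionalExtensionality.

Ltac fixb := repeat match goal with H : (_ = false) |- _ => move/negbT: H => H end.
Ltac slia := fixb; lia.

Module M1.
Set Implicit Arguments. Unset Strict Implicit. Unset Printing Implicit Defensive.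

Lemma size_setn (s : seq nat) i b : i < size s -> size (set_nth 0 s i b) = size s.
Proof. by move=> h; rewrite size_set_nth; lia. Qed.

Lemma nth_setn (s : seq nat) i b r : nth 0 (set_nth 0 s i b) r = if r == i then b else nth 0 s r.
Proof. by rewrite nth_set_nth. Qed.

Lemma size_take' (s : seq nat) n : size (take n s) = minn n (size s).
Proof. by rewrite size_take; case: ltnP => ?; lia. Qed.

Lemma nth_take' (s : seq nat) n r : nth 0 (take n s) r = if r < n then nth 0 s r else 0.
Proof.
case: ltnP => h; first by rewrite nth_take.
rewrite nth_default // size_take; case: ifP => hh //; slia.
Qed.

Lemma take_setn (s : seq nat) n i b : i < size s -> i < n ->
  take n (set_nth 0 s i b) = set_nth 0 (take n s) i b.
Proof.
move=> h1 h2; apply: (@eq_from_nth _ 0).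
  rewrite size_take size_setn // size_setn //; by rewrite size_take; case: ifP => ?; slia.
move=> r _; rewrite nth_take' !nth_setn nth_take'.
by case: (r =P i) => [->|]; rewrite ?h2.
Qed.

Lemma take_setn_ge (s : seq nat) n i b : n <= i -> i < size s -> take n (set_nth 0 s i b) = take n s.
Proof.
move=> h hs; apply: (@eq_from_nth _ 0).
  rewrite !size_take' size_set_nth; lia.
move=> r _; rewrite !nth_take' nth_setn; case: ifP => // hr; case: eqP => // e; exfalso; slia.
Qed.

Lemma drop_setn (s : seq nat) n i b : n <= i ->
  drop n (set_nth 0 s i b) = set_nth 0 (drop n s) (i - n) b.
Proof.
move=> h; apply: (@eq_from_nth _ 0).
  by rewrite size_drop !size_set_nth size_drop; lia.
move=> r _; rewrite nth_drop !nth_setn nth_drop.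
by do 2 case: eqP => ? //; exfalso; lia.
Qed.

Lemma drop_setn_lt (s : seq nat) n i b : i < n -> i < size s ->
  drop n (set_nth 0 s i b) = drop n s.
Proof.
move=> h hs; apply: (@eq_from_nth _ 0); first by rewrite !size_drop size_setn.
by move=> r _; rewrite !nth_drop nth_setn; case: eqP => //; lia.
Qed.

Lemma setn_id (s : seq nat) i : i < size s -> set_nth 0 s i (nth 0 s i) = s.
Proof.
move=> h; apply: (@eq_from_nth _ 0); first by rewrite size_setn.
by move=> r _; rewrite nth_setn; case: eqP => // ->.
Qed.

Lemma setn_setn (s : seq nat) i a b : set_nth 0 (set_nth 0 s i a) i b = set_nth 0 s i b.
Proof. by rewrite set_set_nth eqxx. Qed.

End M1.
Import M1.

Module M2.
Set Implicit Arguments. Unset Strict Implicit. Unset Printing Implicit Defensive.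

Lemma pow_bound j : 1 <= j -> 4 * 3 ^ j <= 100 ^ (2 * j - 1).
Proof.
elim: j => // j IH _; case: j IH => [|j] IH //.
have -> : 2 * j.+2 - 1 = (2 * j.+1 - 1).+2 by lia.
rewrite (expnS 3 j.+1) (expnS 100 (2*j.+1-1).+1) (expnS 100 (2*j.+1-1)); have := IH isT; nia.
Qed.

Lemma Mj_gt0 j : 0 < Mj j. Proof. by rewrite /Mj expn_gt0. Qed.
Lemma Nj_gt0 j : 0 < Nj j. Proof. by rewrite /Nj expn_gt0. Qed.

Lemma NjE j : 1 <= j -> Nj j = Mj j * 100 ^ (2 * j - 1).
Proof.
move=> hj; rewrite /Nj /Mj -expnD; congr (_ ^ _).
rewrite -!mulnn; case: j hj => // j _ /=; nia.
Qed.

Lemma spec_lt j q : 1 <= j -> q <= j -> 3 ^ q * Mj j < Nj j.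
Proof.
move=> hj hq; rewrite NjE //.
have h1 := pow_bound hj; have h2 : 3 ^ q <= 3 ^ j by rewrite leq_exp2l.
have h3 := Mj_gt0 j; nia.
Qed.

Lemma spec_gt0 j q : 0 < 3 ^ q * Mj j.
Proof. by rewrite muln_gt0 expn_gt0 Mj_gt0. Qed.

Lemma ccS k i : i <= k -> cc k i.+1 = 3 ^ i * Mj k.
Proof. by move=> h; rewrite /cc /= ltnS h. Qed.

Lemma cc_last k : cc k k.+2 = Nj k.
Proof. by rewrite /cc /= ltnn. Qed.

Lemma cc0 k : cc k 0 = 0. Proof. by []. Qed.

Lemma top_bound k : 1 <= k -> 3 ^ k * Mj k + 2 <= Nj k.
Proof.
move=> hk; rewrite NjE //; have h1 := pow_bound hk.
have h3 := Mj_gt0 k; have h4 : 0 < 3 ^ k by rewrite expn_gt0.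
nia.
Qed.

Lemma cc_lt k t : t <= k -> cc k t < cc k t.+1.
Proof.
move=> h; rewrite ccS //; case: t h => [|t] h; first by rewrite mul1n Mj_gt0.
rewrite ccS; last lia.
rewrite expnS; have h3 := Mj_gt0 k; have h4 : 0 < 3 ^ t by rewrite expn_gt0.
nia.
Qed.

Lemma cc_le k t : t <= k -> cc k t.+1 <= 3 ^ k * Mj k.
Proof.
move=> h; rewrite ccS // leq_mul2r leq_exp2l //; lia.
Qed.

Lemma cc_inj k i j : i <= k -> j <= k -> cc k i = cc k j -> i = j.
Proof.
case: i => [|i]; case: j => [|j] hi hj //.
- by rewrite ccS ?cc0; [move=> e; have := spec_gt0 k j; lia | lia].
- by rewrite ccS ?cc0; [move=> e; have := spec_gt0 k i; lia | lia].
rewrite !ccS; try lia.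
by move/eqP; rewrite eqn_pmul2r ?Mj_gt0 // eqn_exp2l // => /eqP ->.
Qed.

Lemma pos_nonspec k j i m q : 1 <= j -> j < k -> i <= k -> q <= j ->
  (cc k i.+1).-1 != m * Nj j + (3 ^ q * Mj j).-1.
Proof.
move=> hj hjk hi hq; apply/eqP => e.
have p1 := spec_gt0 k i; have p2 := spec_gt0 j q.
rewrite ccS // in e.
have e2 : 3 ^ i * Mj k = m * Nj j + 3 ^ q * Mj j by lia.
have hd : Nj j %| Mj k.
  rewrite /Nj /Mj dvdn_exp2l // -!mulnn; have jk2 : j <= k.-1 by lia.
  exact (leq_mul jk2 jk2).
have : (3 ^ i * Mj k) %% Nj j = 0 by apply/eqP; rewrite -/(dvdn _ _) dvdn_mull.
rewrite e2 modnMDl modn_small; last exact: spec_lt.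
lia.
Qed.

End M2.
Import M2.

Module M3.
Set Implicit Arguments. Unset Strict Implicit. Unset Printing Implicit Defensive.
Import GRing.Theory.

Section Alg.
Variable K : fieldType.
Local Open Scope ring_scope.
Local Notation elt := (elt K).

Lemma sum_single (S : nat) (F : nat -> K) n :
  (forall i, (i < S)%N -> i != n -> F i = 0) -> \sum_(i < S) F i = if (n < S)%N then F n else 0.
Proof.
elim: S => [|S IH] hF; first by rewrite big_ord0.
rewrite big_ord_recr /= IH; last by move=> i hi; apply: hF; lia.
case: (ltngtP n S) => h.
- by rewrite (hF S) ?addr0 //; [ | apply/eqP; lia]; case: ifP => //; lia.
- rewrite (hF S) ?addr0 //; [ | apply/eqP; lia]; case: ifP => //; lia.
- by subst; rewrite ltnSn add0r.
Qed.

Lemma mul_uz (u z : elt) n nz : homog n u -> (forall w, z w != 0 -> size w = nz) ->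
  forall x, Defs.mul u z x = if size x == (n + nz)%N then u (take n x) * z (drop n x) else 0.
Proof.
move=> [_ hu] hz x; rewrite /Defs.mul (@sum_single _ (fun i => u (take i x) * z (drop i x)) n).
  case: ifP => h1; case: ifP => h2 //.
  - case: (z (drop n x) =P 0) => [->|/eqP hne]; first by rewrite mulr0.
    by have := hz _ hne; rewrite size_drop; slia.
  - slia.
move=> i hi hin; case: (u (take i x) =P 0) => [->|/eqP hne]; first by rewrite mul0r.
by have := hu _ hne; rewrite size_take'; lia.
Qed.

Lemma mul_uzv (u z v : elt) n nz : homog n u -> (forall w, z w != 0 -> size w = nz) ->
  forall w, Defs.mul (Defs.mul u z) v w = if (n + nz <= size w)%N then
     u (take n w) * z (take nz (drop n w)) * v (drop (n + nz) w) else 0.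
Proof.
move=> hu hz w; rewrite {1}/Defs.mul (@sum_single _ (fun i => Defs.mul u z (take i w) * v (drop i w)) (n + nz)).
  rewrite ltnS; case: ifP => // h.
  rewrite (mul_uz hu hz) size_take' (_ : minn _ _ = n + nz)%N; last lia.
  by rewrite eqxx take_takel ?leq_addr // take_drop addnC.
move=> i hi hin; rewrite (mul_uz hu hz) size_take'.
by case: ifP => h; [ exfalso; slia | rewrite mul0r].
Qed.

Definition opf (i a b : nat) (f : elt) : elt :=
  fun w => if (i < size w)%N && (nth 0%N w i == a) then f (set_nth 0%N w i b) else 0.

Lemma opf_fin i a b f : fin_supp f -> fin_supp (opf i a b f).
Proof.
move=> [l hl]; exists (map (fun x => set_nth 0%N x i a) l) => w hw.
rewrite /opf; case: ifP => // /andP [h1 /eqP h2]; apply: hl; apply: contra hw => hin.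
by apply/mapP; exists (set_nth 0%N w i b) => //; rewrite setn_setn -h2 setn_id.
Qed.

Lemma opf_homog n i a b f : homog n f -> homog n (opf i a b f).
Proof.
move=> [hf hs]; split; first exact: opf_fin.
move=> w; rewrite /opf; case: ifP => [/andP [h1 _] hne|]; last by rewrite eqxx.
by rewrite -(size_setn b h1); apply: hs.
Qed.

Lemma opf_mono i a b s w : opf i a b (mono K s) w =
  if (i < size s)%N && (nth 0%N s i == b) then mono K (set_nth 0%N s i a) w else 0.
Proof.
rewrite /opf /mono.
case: (boolP ((i < size w)%N && (nth 0%N w i == a))) => [/andP [h1 /eqP h2]|hn].
  case: (set_nth 0%N w i b =P s) => [<-|hne].
    by rewrite size_setn // h1 nth_setn eqxx eqxx /= setn_setn -h2 setn_id // eqxx.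
  case: ifP => // /andP [h3 /eqP h4]; case: eqP => // e; exfalso; apply: hne.
  by rewrite e setn_setn -h4 setn_id.
case: ifP => // /andP [h3 /eqP h4]; case: eqP => // e; exfalso; move: hn.
by rewrite e size_setn // h3 nth_setn eqxx eqxx.
Qed.

Lemma opf_lin i a b (X : Type) (r : seq X) (c : X -> K) (F : X -> elt) w :
  opf i a b (fun w => \sum_(x <- r) c x * F x w) w = \sum_(x <- r) c x * opf i a b (F x) w.
Proof. by rewrite /opf; case: ifP => // _; rewrite big1 // => x _; rewrite mulr0. Qed.

Definition cutf (n : nat) (f : elt) : elt := fun w => if size w == n then f w else 0.

Lemma cutf_lin n (X : Type) (r : seq X) (c : X -> K) (F : X -> elt) w :
  cutf n (fun w => \sum_(x <- r) c x * F x w) w = \sum_(x <- r) c x * cutf n (F x) w.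
Proof. by rewrite /cutf; case: ifP => // _; rewrite big1 // => x _; rewrite mulr0. Qed.

Lemma inZ_supp j (z : elt) w : inZ j z -> z w != 0 -> size w = (Nj j).-1.
Proof.
case=> [H|H]; [destruct H as (kap & s & p & q & hs & _ & _ & hz) | destruct H as (kap & s1 & s2 & p & q & l1 & l2 & h1 & h2 & _ & _ & _ & _ & _ & _ & _ & hz)];
  rewrite hz /mono.
- by case: (w =P s) => [-> _ //|_]; rewrite mulr0 eqxx.
- by case: (w =P s1) => [-> _ //|_]; case: (w =P s2) => [-> _ //|_]; rewrite addr0 mulr0 eqxx.
Qed.

Lemma opf_Z j (z : elt) i a b : inZ j z -> (i < (Nj j).-1)%N ->
  (forall q, (q <= j)%N -> i != (3 ^ q * Mj j).-1) -> inZ j (opf i a b z).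
Proof.
move=> hZ hi hns.
have lt1 : forall q, (q <= j)%N -> (3 ^ q * Mj j).-1 != i by move=> q hq; rewrite eq_sym hns.
case: hZ => [H|H]; [destruct H as (kap & s & p & q & hs & hpq & hl & hz) | destruct H as (kap & s1 & s2 & p & q & l1 & l2 & h1 & h2 & hpq & hl & e1 & e2 & e3 & e4 & ho & hz)].
- left; case: (boolP ((i < size s)%N && (nth 0%N s i == b))) => hc.
  + exists kap, (set_nth 0%N s i a), p, q; split; first by rewrite size_setn // hs.
    split => //; split.
      rewrite /letter !nth_setn.
      by rewrite (negbTE (lt1 p _)) ?(negbTE (lt1 q _)) //; lia.
    move=> w; have := opf_mono i a b s w; rewrite hc => <-.
    by rewrite /opf; case: ifP => _ //; rewrite ?hz ?mulr0.
  + exists 0, s, p, q; split => //; split => //; split => // w.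
    rewrite mul0r /opf; case: ifP => // /andP [h1 _]; rewrite hz /mono; case: eqP => [e|_]; last by rewrite mulr0.
    by exfalso; move: hc; rewrite -e size_setn // h1 nth_setn eqxx eqxx.
- right.
  have hsame : nth 0%N s1 i = nth 0%N s2 i.
    have := ho i.+1 isT; rewrite /letter /=; apply.
      by apply/eqP => e; move: (hns p); rewrite -e /=; lia.
    by apply/eqP => e; move: (hns q); rewrite -e /=; lia.
  have hop : forall w, opf i a b z w = kap * (opf i a b (mono K s1) w + opf i a b (mono K s2) w).
    by move=> w; rewrite /opf; case: ifP => _; rewrite ?hz ?addr0 ?mulr0.
  case: (boolP (nth 0%N s1 i == b)) => hc.
  + have hi1 : (i < size s1)%N by rewrite h1.
    have hi2 : (i < size s2)%N by rewrite h2.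
    exists kap, (set_nth 0%N s1 i a), (set_nth 0%N s2 i a), p, q, l1, l2.
    rewrite !size_setn // h1 h2; do 4 split => //.
    rewrite /letter !nth_setn.
    rewrite (negbTE (lt1 p _)) ?(negbTE (lt1 q _)); try lia.
    do 4 (split => //).
    split.
      move=> r hr1 hr2 hr3; rewrite !nth_setn; case: eqP => // _; exact: ho.
    move=> w; rewrite hop !opf_mono hi1 hi2 hc -hsame hc.
    done.
  + exists 0, s1, s2, p, q, l1, l2; do 9 (split => //).
    move=> w; rewrite hop !opf_mono -hsame (negbTE hc) !andbF addr0 !mul0r mulr0.
    done.
Qed.

End Alg.

End M3.
Import M3.

Module M4.
Set Implicit Arguments. Unset Strict Implicit. Unset Printing Implicit Defensive.
Import GRing.Theory.

Section Alg2.
Variable K : fieldType.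
Local Open Scope ring_scope.
Local Notation elt := (elt K).

Lemma Bgen_opf j (g : elt) i a b :
  (forall m q, (q <= j)%N -> i != (m * Nj j + (3 ^ q * Mj j).-1)%N) ->
  Bgen j g -> Bgen j (opf i a b g).
Proof.
move=> hns [m [u [z [v [hu [hz [hv hg]]]]]]].
have hzs := fun w => @inZ_supp K j z w hz.
set n := (m * Nj j)%N; set nz := (Nj j).-1.
have E : forall w, opf i a b g w = if (i < size w)%N && (nth 0%N w i == a) then
    (if (n + nz <= size w)%N then u (take n (set_nth 0%N w i b)) *
      z (take nz (drop n (set_nth 0%N w i b))) * v (drop (n + nz) (set_nth 0%N w i b)) else 0) else 0.
  move=> w; rewrite /opf; case: ifP => // /andP [h1 _].
  by rewrite hg (mul_uzv _ hu hzs) size_setn.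
case: (ltnP i n) => hin.
  exists m, (opf i a b u), z, v; split; first exact: opf_homog.
  do 2 (split => //); move=> w; rewrite E (mul_uzv _ (opf_homog i a b hu) hzs).
  case: (leqP (n + nz) (size w)) => hL; last by case: ifP.
  rewrite /opf size_take' nth_take' hin (_ : (i < minn n (size w))%N = (i < size w)%N); last first.
    by apply/idP/idP; lia.
  case: ifP => [/andP [h1 _]|_]; last by rewrite !mul0r.
  by rewrite take_setn // drop_setn_lt // drop_setn_lt //; lia.
case: (ltnP i (n + nz)) => hin2.
  have hZ' : inZ j (opf (i - n) a b z).
    apply: opf_Z => //; first by lia.
    by move=> q hq; apply/eqP => e; move: (hns m q hq); rewrite -/n; lia.
  exists m, u, (opf (i - n) a b z), v; do 2 (split => //).
  have hzs' := fun w => @inZ_supp K j _ w hZ'.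
  split => // w; rewrite E (mul_uzv _ hu hzs').
  case: (leqP (n + nz) (size w)) => hL; last by case: ifP.
  rewrite /opf size_take' size_drop nth_take' nth_drop.
  rewrite (_ : (i - n < nz)%N = true); last by apply/idP; lia.
  rewrite (_ : (i - n < minn nz (size w - n))%N = (i < size w)%N); last by apply/idP/idP; lia.
  rewrite subnKC //.
  case: ifP => [/andP [h1 _]|_]; last by rewrite mulr0 mul0r.
  rewrite take_setn_ge // drop_setn // take_setn ?size_drop //; try lia.
  by rewrite drop_setn_lt //; lia.
exists m, u, z, (opf (i - (n + nz)) a b v); do 3 (split => //); first exact: opf_fin.
move=> w; rewrite E (mul_uzv _ hu hzs).
case: (leqP (n + nz) (size w)) => hL; last by case: ifP.
rewrite /opf size_drop nth_drop subnKC //.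
rewrite (_ : (i - (n + nz) < size w - (n + nz))%N = (i < size w)%N); last by apply/idP/idP; lia.
case: ifP => [/andP [h1 _]|]; last by rewrite mulr0.
rewrite (@take_setn_ge w n i b); try lia.
rewrite [drop (n + nz) _]drop_setn // drop_setn // (@take_setn_ge (drop n w) nz (i - n) b) ?size_drop //; lia.
Qed.

Lemma Bgen_cutf j (g : elt) n' : Bgen j g -> Bgen j (cutf n' g).
Proof.
move=> [m [u [z [v [hu [hz [hv hg]]]]]]].
have hzs := fun w => @inZ_supp K j z w hz.
set n := (m * Nj j)%N; set nz := (Nj j).-1.
exists m, u, z, (fun y => if (size y + (n + nz))%N == n' then v y else 0); do 3 (split => //).
  case: hv => l hl; exists l => w hw; case: ifP => // _; exact: hl.
move=> w; rewrite /cutf hg !(mul_uzv _ hu hzs).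
case: (leqP (n + nz) (size w)) => hL; last by case: ifP.
rewrite size_drop /n /nz subnK //; case: ifP => _ //; by rewrite mulr0.
Qed.

Lemma span_ext (P : elt -> Prop) (f f' : elt) : in_span P f -> (forall w, f w = f' w) -> in_span P f'.
Proof. by move=> [gs [h1 h2]] e; exists gs; split => // w; rewrite -e. Qed.

Lemma span_gen (P : elt -> Prop) g : P g -> in_span P g.
Proof.
move=> hg; exists [:: (1, g)]; split; first by move=> x [<-|[]].
by move=> w; rewrite big_cons big_nil addr0 mul1r.
Qed.

Lemma span_zero (P : elt -> Prop) : in_span P (fun _ => 0).
Proof. by exists [::]; split => // w; rewrite big_nil. Qed.

Lemma span_add (P : elt -> Prop) (f g : elt) : in_span P f -> in_span P g -> in_span P (fun w => f w + g w).
Proof.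
move=> [gs1 [a1 b1]] [gs2 [a2 b2]]; exists (gs1 ++ gs2); split.
  by move=> x hx; case: (List.in_app_or _ _ _ hx) => ?; [apply: a1 | apply: a2].
by move=> w; rewrite big_cat b1 b2.
Qed.

Lemma span_scale (P : elt -> Prop) c (f : elt) : in_span P f -> in_span P (fun w => c * f w).
Proof.
move=> [gs [a1 b1]]; exists (map (fun g => (c * g.1, g.2)) gs); split.
  move=> x hx; case: (proj1 (List.in_map_iff _ _ _) hx) => y [<- hy]; exact: (a1 _ hy).
by move=> w; rewrite big_map b1 big_distrr; apply: eq_bigr => x _; rewrite /= mulrA.
Qed.

Lemma span_sum (P : elt -> Prop) (X : Type) (r : seq X) (c : X -> K) (F : X -> elt) :
  (forall x, List.In x r -> in_span P (F x)) -> in_span P (fun w => \sum_(x <- r) c x * F x w).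
Proof.
elim: r => [|x r IH] hF.
  by apply: span_ext (span_zero P) _ => w; rewrite big_nil.
apply: span_ext (span_add (span_scale (c x) (hF x (or_introl erefl))) (IH (fun y hy => hF y (or_intror hy)))) _ => w.
by rewrite big_cons.
Qed.

Definition linop (T : elt -> elt) := forall (X : Type) (r : seq X) (c : X -> K) (F : X -> elt) w,
  T (fun w => \sum_(x <- r) c x * F x w) w = \sum_(x <- r) c x * T (F x) w.

Lemma linop_comp T1 T2 : linop T1 -> linop T2 -> linop (fun f => T1 (T2 f)).
Proof.
move=> h1 h2 X r c F w /=.
have -> : T2 (fun w => \sum_(x <- r) c x * F x w) = fun w => \sum_(x <- r) c x * T2 (F x) w.
  by apply: functional_extensionality => y; apply: h2.
exact: h1.
Qed.

Lemma span_linop (P : elt -> Prop) T (f : elt) : linop T -> (forall g, P g -> in_span P (T g)) ->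
  in_span P f -> in_span P (T f).
Proof.
move=> hT hP [gs [a1 b1]].
have -> : f = fun w => \sum_(g <- gs) g.1 * g.2 w by apply: functional_extensionality.
apply: span_ext (@span_sum P _ gs (fun g => g.1) (fun g => T g.2) _) _.
  by move=> g hg; apply: hP; apply: a1.
by move=> w; rewrite hT.
Qed.

End Alg2.

End M4.
Import M4.

Module M5.
Set Implicit Arguments. Unset Strict Implicit. Unset Printing Implicit Defensive.

Lemma in_pat_gen k (sig : {perm 'I_k.+1}) : 1 <= k -> forall d t w, t + d = k.+1 ->
  in_pat [seq (xi k i.+1, cc k (sig (inord i))) | i <- iota t d] (xi k k.+2) (drop (cc k t) w) =
  (size w == (Nj k).-1) &&
    all (fun i => nth 0 w (cc k i.+1).-1 == cc k (sig (inord i))) (iota t d).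
Proof.
move=> hk; have hb := top_bound hk.
elim=> [|d IH] t w htd.
  rewrite addn0 in htd; subst t => /=.
  rewrite andbT /xi /= cc_last size_drop ccS //.
  by apply/eqP/eqP; lia.
rewrite /= drop_drop nth_drop.
have ht : t <= k by lia.
have hlt := cc_lt ht; have hle := cc_le ht.
rewrite (_ : (xi k t.+1).+1 + cc k t = cc k t.+1); last by rewrite /xi /=; lia.
rewrite (_ : cc k t + xi k t.+1 = (cc k t.+1).-1); last by rewrite /xi /=; lia.
rewrite IH; last lia.
case: (size w =P (Nj k).-1) => hs /=; last by rewrite !andbF.
rewrite size_drop hs (_ : xi k t.+1 < (Nj k).-1 - cc k t = true) //.
by apply/idP; rewrite /xi /=; lia.
Qed.

Definition pos k (i : 'I_k.+1) := (cc k i.+1).-1.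

Lemma in_Esig_char k (sig : {perm 'I_k.+1}) s : 1 <= k ->
  in_Esig sig s = (size s == (Nj k).-1) &&
     all (fun i : 'I_k.+1 => nth 0 s (pos i) == cc k (sig i)) (enum 'I_k.+1).
Proof.
move=> hk; rewrite /in_Esig -[s]drop0 -(cc0 k) in_pat_gen // drop0.
rewrite -val_enum_ord all_map; congr andb; apply: eq_all => i /=.
by rewrite inord_val.
Qed.

End M5.
Import M5.

Module M6.
Set Implicit Arguments. Unset Strict Implicit. Unset Printing Implicit Defensive.
Import GRing.Theory.

Fixpoint setall (L : seq (nat * nat * nat)) (w : seq nat) : seq nat :=
  if L is x :: L' then setall L' (set_nth 0 w x.1.1 x.2) else w.

Definition allc (L : seq (nat * nat * nat)) (w : seq nat) :=
  all (fun x : nat * nat * nat => (x.1.1 < size w) && (nth 0 w x.1.1 == x.1.2)) L.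

Lemma size_setall L w : all (fun x : nat * nat * nat => x.1.1 < size w) L -> size (setall L w) = size w.
Proof.
elim: L w => [|x L IH] w //= /andP [h1 h2].
rewrite IH size_setn //; by rewrite size_setn.
Qed.

Lemma nth_setall_out L w r : r \notin [seq x.1.1 | x <- L] -> nth 0 (setall L w) r = nth 0 w r.
Proof.
elim: L w => [|x L IH] w //=; rewrite inE negb_or => /andP [h1 h2].
by rewrite IH // nth_setn (negbTE h1).
Qed.

Lemma nth_setall_in L w x : uniq [seq y.1.1 | y <- L] -> x \in L -> nth 0 (setall L w) x.1.1 = x.2.
Proof.
elim: L w => [|y L IH] w //= /andP [h1 h2]; rewrite inE => /orP [/eqP ->|hx].
  by rewrite nth_setall_out // nth_setn eqxx.
by apply: IH.
Qed.

Section Opl.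
Variable K : fieldType.
Local Open Scope ring_scope.
Local Notation elt := (elt K).

Definition opl (L : seq (nat * nat * nat)) (f : elt) : elt :=
  foldr (fun x g => opf x.1.1 x.1.2 x.2 g) f L.

Lemma opl_eval L (f : elt) w : uniq [seq x.1.1 | x <- L] ->
  opl L f w = if allc L w then f (setall L w) else 0.
Proof.
elim: L w => [|x L IH] w //= /andP [h1 h2].
rewrite {1}/opf; case: ifP => //= /andP [h3 h4]; rewrite IH //.
rewrite (_ : allc L (set_nth 0 w x.1.1 x.2) = allc L w) //.
apply: eq_in_all => y hy /=; rewrite size_setn // nth_setn.
case: (y.1.1 =P x.1.1) => // e; exfalso; move/negP: h1; apply; rewrite -e; exact: map_f.
Qed.

Lemma opl_lin L : linop (opl L).
Proof.
elim: L => [|x L IH] /=; first by [].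
exact: (linop_comp (fun X r c F w => opf_lin x.1.1 x.1.2 x.2 r c F w) IH).
Qed.

Lemma Bgen_opl j L (g : elt) :
  (forall x, x \in L -> forall m q, (q <= j)%N -> x.1.1 != (m * Nj j + (3 ^ q * Mj j).-1)%N) ->
  Bgen j g -> Bgen j (opl L g).
Proof.
elim: L => [|x L IH] //= hL hg; apply: Bgen_opf; first by apply: hL; rewrite inE eqxx.
by apply: IH => // y hy; apply: hL; rewrite inE hy orbT.
Qed.

End Opl.

End M6.
Import M6.

Module M7.
Set Implicit Arguments. Unset Strict Implicit. Unset Printing Implicit Defensive.
Import GRing.Theory.

Section Conc.
Variable k : nat.

Definition Lr (rho : {perm 'I_k.+1}) : seq (nat * nat * nat) :=
  [seq (pos i, cc k i, cc k (rho i)) | i <- enum 'I_k.+1].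

Lemma posE (i : 'I_k.+1) : pos i = (3 ^ i * Mj k).-1.
Proof. by rewrite /pos ccS // -ltnS. Qed.

Lemma Lr_pos rho : [seq x.1.1 | x <- Lr rho] = [seq pos i | i <- enum 'I_k.+1].
Proof. by rewrite -map_comp. Qed.

Lemma pos_inj : injective (@pos k).
Proof.
move=> i j; rewrite !posE => e.
have h1 := spec_gt0 k i; have h2 := spec_gt0 k j.
have /eqP : 3 ^ i * Mj k = 3 ^ j * Mj k by lia.
by rewrite eqn_pmul2r ?Mj_gt0 // eqn_exp2l // => /eqP/val_inj.
Qed.

Lemma Lr_uniq rho : uniq [seq x.1.1 | x <- Lr rho].
Proof. by rewrite Lr_pos map_inj_uniq ?enum_uniq //; exact: pos_inj. Qed.

Lemma pos_lt (i : 'I_k.+1) : 1 <= k -> pos i < (Nj k).-1.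
Proof.
move=> hk; have := top_bound hk.
have : 3 ^ i * Mj k <= 3 ^ k * Mj k by rewrite leq_mul2r leq_exp2l // -ltnS ltn_ord orbT.
have := spec_gt0 k i; rewrite posE; lia.
Qed.

Definition W rho w := setall (Lr rho) w.

Lemma W_size rho w : 1 <= k -> size w = (Nj k).-1 -> size (W rho w) = size w.
Proof.
move=> hk hs; apply: size_setall; rewrite all_map; apply/allP => i _ /=.
by rewrite hs pos_lt.
Qed.

Lemma W_pos rho w i : nth 0 (W rho w) (pos i) = cc k (rho i).
Proof.
exact: (@nth_setall_in (Lr rho) w (pos i, cc k i, cc k (rho i)) (Lr_uniq rho)
   (map_f _ (mem_enum _ i))).
Qed.

Lemma W_out rho w r : (forall i : 'I_k.+1, r != pos i) -> nth 0 (W rho w) r = nth 0 w r.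
Proof.
move=> h; apply: nth_setall_out; rewrite Lr_pos; apply/mapP => [[i _ e]].
by move: (h i); rewrite e eqxx.
Qed.

Lemma allc_Lr rho w : allc (Lr rho) w = allc (Lr 1) w.
Proof. by rewrite /allc !all_map; apply: eq_all => i. Qed.

Lemma pos_dec r : (exists i : 'I_k.+1, r = pos i) \/ (forall i : 'I_k.+1, r != pos i).
Proof.
case: (boolP [exists i : 'I_k.+1, r == pos i]) => [/existsP [i /eqP e]|/existsPn h].
  by left; exists i.
by right.
Qed.

Lemma letter_pos (p : 'I_k.+1) s : letter s (3 ^ p * Mj k) = nth 0 s (pos p).
Proof. by rewrite /letter posE. Qed.

Lemma W_swap (p' q' : 'I_k.+1) rho w x y : 1 <= k -> p' != q' -> size w = (Nj k).-1 ->
  size x = size y -> nth 0 x (pos p') = nth 0 y (pos q') -> nth 0 x (pos q') = nth 0 y (pos p') ->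
  (forall r, r != pos p' -> r != pos q' -> nth 0 x r = nth 0 y r) ->
  W rho w = x -> W (tperm p' q' * rho) w = y.
Proof.
move=> hk hpq hs hxy e1 e2 ho hW; subst x.
apply: (@eq_from_nth _ 0); first by rewrite -hxy !W_size.
move=> r _; case: (pos_dec r) => [[i ->]|hr].
  rewrite W_pos permM.
  case: (i =P p') => [->|hip]; first by rewrite tpermL -e2 W_pos.
  case: (i =P q') => [->|hiq]; first by rewrite tpermR -e1 W_pos.
  rewrite tpermD; try (by apply/eqP => e; subst).
  rewrite -(W_pos rho w) ho //; apply/eqP => /pos_inj e; subst; by [apply: hip | apply: hiq].
rewrite W_out // -ho; try exact: hr.
by rewrite W_out.
Qed.

End Conc.

End M7.
Import M7.

Module M8.
Set Implicit Arguments. Unset Strict Implicit. Unset Printing Implicit Defensive.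
Import GRing.Theory.

Section Psi.
Variable K : fieldType.
Variable k : nat.
Local Open Scope ring_scope.
Local Notation elt := (elt K).

Definition sgn (rho : {perm 'I_k.+1}) : K := (-1) ^+ odd_perm rho.

Definition psi (f : elt) : elt := fun w =>
  \sum_(rho : {perm 'I_k.+1}) sgn rho * cutf (Nj k).-1 (opl (Lr rho) f) w.

Lemma cutopl_lin n L : linop (fun f : elt => cutf n (opl L f)).
Proof. have h1 : linop (cutf (K:=K) n) := fun X r c F w => @cutf_lin K n X r c F w.
exact: linop_comp h1 (opl_lin L). Qed.

Lemma psi_lin : linop psi.
Proof.
move=> X r c F w; rewrite /psi.
have hl : forall rho : {perm 'I_k.+1}, linop (K:=K) (fun f : elt => cutf (Nj k).-1 (opl (Lr rho) f)).
  move=> rho; exact: cutopl_lin.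
rewrite (eq_bigr (fun rho => \sum_(x <- r) sgn rho * (c x * cutf (Nj k).-1 (opl (Lr rho) (F x)) w))); last first.
  by move=> rho _; have := hl rho X r c F w; rewrite /= => ->; rewrite big_distrr.
rewrite exchange_big; apply: eq_bigr => x _; rewrite big_distrr; apply: eq_bigr => rho _ /=.
by rewrite mulrCA.
Qed.

Lemma psi_span_lt j (f : elt) : (1 <= j)%N -> (j < k)%N -> inB j f -> inB j (psi f).
Proof.
move=> hj hjk; apply: span_linop psi_lin _ => g hg.
apply: span_ext (@span_sum _ (Bgen j) _ (index_enum _) sgn (fun rho => cutf (Nj k).-1 (opl (Lr rho) g)) _) _;
  last by [].
move=> rho _; apply: span_gen; apply: Bgen_cutf; apply: Bgen_opl hg => x /mapP [i _ ->] m q hq /=.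
exact: pos_nonspec hj hjk (ltn_ord i) hq.
Qed.

End Psi.

End M8.
Import M8.

Module M9.
Set Implicit Arguments. Unset Strict Implicit. Unset Printing Implicit Defensive.
Import GRing.Theory.

Section Van.
Variable K : fieldType.
Variable k : nat.
Hypothesis hk : (1 <= k)%N.
Local Open Scope ring_scope.
Local Notation elt := (elt K).

Lemma ord_le (i : 'I_k.+1) : (i <= k)%N.
Proof. by rewrite -ltnS. Qed.

Lemma sgn_tperm (p q : 'I_k.+1) rho : p != q -> sgn K (tperm p q * rho) = - sgn K rho.
Proof.
by move=> hpq; rewrite /sgn odd_permM odd_tperm hpq signr_addb expr1 mulN1r.
Qed.

Lemma Zk_alt (z : elt) w : inZ k z -> size w = (Nj k).-1 ->
  \sum_(rho : {perm 'I_k.+1}) sgn K rho * z (W rho w) = 0.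
Proof.
move=> hZ hs.
case: hZ => [H|H]; [destruct H as (kap & s & p & q & hsz & hpq & hl & hz) | destruct H as (kap & s1 & s2 & p & q & l1 & l2 & h1 & h2 & hpq & hl & e1 & e2 & e3 & e4 & ho & hz)].
- have hp : (p < k.+1)%N by lia.
  have hq : (q < k.+1)%N by lia.
  rewrite big1 // => rho _; rewrite hz /mono; case: eqP => [e|_]; last by rewrite !mulr0.
  exfalso; move: hl.
  rewrite (letter_pos (Ordinal hp)) (letter_pos (Ordinal hq)) -e !W_pos => /(cc_inj (ord_le _) (ord_le _)) /val_inj /perm_inj [] /=; lia.
- have hp : (p < k.+1)%N by lia.
  have hq : (q < k.+1)%N by lia.
  set p' := Ordinal hp; set q' := Ordinal hq.
  have hpq' : p' != q' by apply/eqP => [[]]; lia.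
  have f1 : nth 0%N s1 (pos p') = l1 by rewrite -letter_pos.
  have f2 : nth 0%N s1 (pos q') = l2 by rewrite -letter_pos.
  have f3 : nth 0%N s2 (pos p') = l2 by rewrite -letter_pos.
  have f4 : nth 0%N s2 (pos q') = l1 by rewrite -letter_pos.
  have fo : forall r, r != pos p' -> r != pos q' -> nth 0%N s1 r = nth 0%N s2 r.
    move=> r hr1 hr2; have h := ho r.+1 isT; rewrite /letter /= in h; apply: h.
      by apply/eqP => e; move: hr1; rewrite posE -e /= eqxx.
    by apply/eqP => e; move: hr2; rewrite posE -e /= eqxx.
  have key : forall rho, (W (tperm p' q' * rho) w == s1) = (W rho w == s2).
    move=> rho; apply/eqP/eqP => hW.
      rewrite -(tpermKg p' q' rho); apply: (W_swap hk hpq' hs) hW; rewrite ?h1 ?h2 ?f1 ?f2 ?f3 ?f4 //.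
    apply: (W_swap hk hpq' hs) hW; rewrite ?h1 ?h2 ?f1 ?f2 ?f3 ?f4 //.
    by move=> r a b; rewrite fo.
  have S1 : \sum_(rho : {perm 'I_k.+1}) sgn K rho * mono K s1 (W rho w) =
            - \sum_(rho : {perm 'I_k.+1}) sgn K rho * mono K s2 (W rho w).
    rewrite (reindex_inj (mulgI (tperm p' q'))) /= -sumrN; apply: eq_bigr => rho _.
    by rewrite sgn_tperm // /mono key mulNr.
  rewrite (eq_bigr (fun rho => kap * (sgn K rho * mono K s1 (W rho w) + sgn K rho * mono K s2 (W rho w)))); last first.
    by move=> rho _; rewrite hz mulrCA mulrDr.
  by rewrite -big_distrr big_split /= S1 addNr mulr0.
Qed.

End Van.

End M9.
Import M9.

Module M10.
Set Implicit Arguments. Unset Strict Implicit. Unset Printing Implicit Defensive.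
Import GRing.Theory.

Section Fin.
Variable K : fieldType.
Variable k : nat.
Hypothesis hk : (1 <= k)%N.
Local Open Scope ring_scope.
Local Notation elt := (elt K).

Lemma psi_Bk (g : elt) : Bgen k g -> forall w, psi k g w = 0.
Proof.
move=> [m [u [z [v [hu [hz [hv hg]]]]]]] w.
have hzs := fun w => @inZ_supp K k z w hz.
rewrite /psi.
case: (size w =P (Nj k).-1) => hs; last first.
  by rewrite big1 // => rho _; rewrite /cutf (introF eqP hs) mulr0.
have E : forall rho : {perm 'I_k.+1}, cutf (Nj k).-1 (opl (Lr rho) g) w =
   if allc (Lr (1%g : {perm 'I_k.+1})) w then (if m == 0%N then u [::] * z (W rho w) * v [::] else 0) else 0.
  move=> rho; rewrite /cutf hs eqxx opl_eval ?Lr_uniq // allc_Lr; case: ifP => // _.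
  rewrite hg (mul_uzv _ hu hzs) -/(W rho w) W_size // hs.
  case: (m =P 0%N) => [->|hm].
    rewrite mul0n add0n leqnn take0 drop0 take_oversize ?W_size ?hs //.
    by rewrite drop_oversize ?W_size ?hs.
  by have := Nj_gt0 k; case: ifP => //; nia.
rewrite (eq_bigr (fun rho => (if allc (Lr (1%g : {perm 'I_k.+1})) w then (if m == 0%N then u [::] * v [::] else 0) else 0)
    * (sgn K rho * z (W rho w)))); last first.
  move=> rho _; rewrite E; case: ifP => _; last by rewrite !mul0r mulr0.
  case: ifP => _; last by rewrite !mul0r mulr0.
  by ring.
rewrite -big_distrr Zk_alt //; exact: mulr0.
Qed.

Lemma sum_In0 (X : Type) (r : seq X) (F : X -> K) :
  (forall x, List.In x r -> F x = 0) -> \sum_(x <- r) F x = 0.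
Proof.
elim: r => [|x r IH] h; first by rewrite big_nil.
rewrite big_cons h ?IH ?addr0 //; first by move=> y hy; apply: h; right.
by left.
Qed.

Lemma psi_inBk (f : elt) : inB k f -> forall w, psi k f w = 0.
Proof.
move=> [gs [a1 b1]] w.
have -> : f = fun w => \sum_(g <- gs) g.1 * g.2 w by apply: functional_extensionality.
rewrite psi_lin; apply: sum_In0 => g hg.
by rewrite psi_Bk ?mulr0 //; apply: a1.
Qed.

End Fin.

End M10.
Import M10.

Module M11.
Set Implicit Arguments. Unset Strict Implicit. Unset Printing Implicit Defensive.
Import GRing.Theory.

Section Fin2.
Variable K : fieldType.
Variable k : nat.
Hypothesis hk : (1 <= k)%N.
Local Open Scope ring_scope.
Local Notation elt := (elt K).
Local Notation one := (1%g : {perm 'I_k.+1}).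

Lemma Esig_allc w : size w = (Nj k).-1 -> in_Esig one w = allc (Lr one) w.
Proof.
move=> hs; rewrite in_Esig_char // hs eqxx /= /allc /Lr [in RHS]all_map; apply: eq_all => i /=.
by rewrite perm1 hs pos_lt.
Qed.

Lemma W1 w : size w = (Nj k).-1 -> allc (Lr one) w -> W one w = w.
Proof.
move=> hs /allP hA; apply: (@eq_from_nth _ 0%N); first by rewrite W_size.
move=> r _; case: (@pos_dec k r) => [[i ->]|hr]; last by rewrite W_out.
have := hA _ (map_f _ (mem_enum _ i)); rewrite /= => /andP [_ /eqP ->].
by rewrite W_pos perm1.
Qed.

Lemma psi_a (a : elt) :
  (forall (sig : {perm 'I_k.+1}), sig != 1%g -> forall s, a s != 0 -> ~~ in_Esig sig s) ->
  forall w, psi k a w = if in_Esig one w then a w else 0.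
Proof.
move=> hsig w; rewrite /psi.
case: (size w =P (Nj k).-1) => hs; last first.
  rewrite big1; first by rewrite in_Esig_char // (introF eqP hs).
  by move=> rho _; rewrite /cutf (introF eqP hs) mulr0.
rewrite Esig_allc //.
rewrite (eq_bigr (fun rho => sgn K rho * (if allc (Lr one) w then a (W rho w) else 0))); last first.
  by move=> rho _; rewrite /cutf hs eqxx opl_eval ?Lr_uniq // allc_Lr.
case: ifP => hA; last by rewrite big1 // => rho _; rewrite mulr0.
rewrite (bigD1 one) //= big1 ?addr0.
  by rewrite /sgn odd_perm1 expr0 mul1r W1.
move=> rho hrho; case: (a (W rho w) =P 0) => [->|/eqP hne]; first by rewrite mulr0.
have : in_Esig rho (W rho w).
  rewrite in_Esig_char // W_size // hs eqxx /=; apply/allP => i _; by rewrite W_pos.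
by rewrite (negbTE (hsig rho hrho _ hne)).
Qed.

End Fin2.


End M11.
Import M11.

Unset Implicit Arguments.
Set Strict Implicit.
Set Printing Implicit Defensive.
Theorem mainTheorem7 (K : fieldType) (k : nat) (a : elt K) :
  (1 <= k)%N ->
  homog ((100 ^ (k ^ 2)).-1) a ->
  inBsum k a ->
  (forall (sig : {perm 'I_k.+1}), sig != 1%g ->
     forall s, a s != 0%R -> ~~ in_Esig sig s) ->
  inBsum (k.-1) (fun w => if in_Esig (1%g : {perm 'I_k.+1}) w then a w else 0%R).
Proof.
move=> hk ha [bs [hbs hsum]] hsig.
exists (fun j => psi k (bs j)); split.
  move=> j /andP [h1 h2]; apply: psi_span_lt => //; first lia.
  by apply: hbs; apply/andP; split; lia.
move=> w; rewrite -(psi_a hk hsig w).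
have -> : a = fun w => (\sum_(1 <= j < k.+1) 1 * bs j w)%R.
  apply: functional_extensionality => y; rewrite hsum; apply: eq_bigr => j _; by rewrite GRing.mul1r.
rewrite psi_lin big_nat_recr //= psi_inBk ?GRing.mulr0 ?GRing.addr0 //; last first.
  by apply: hbs; rewrite hk leqnn.
rewrite -{1}(prednK hk); apply: eq_bigr => j _; by rewrite GRing.mul1r.
Qed.
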